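(* Let $G=(V,E)$ be a finite simple undirected graph with $\{1,2\}\in E$; write $e_0=\{1,2\}$ and label the other edges $1,\dots,n$, $n=|E|-1$. Let $X\subseteq\mathbb R^n$ be the set of $(u_1,\dots,u_n)$ such that, setting $u_{e_0}:=0$, for every cycle $C$ of $G$ the minimum of $\{u_e:e\in C\}$ is attained at least twice. Let $w\in\mathbb R^n$ be tropically generic, i.e. its coordinates are linearly independent over $\mathbb Q$, and let $Y=\{w-u : u\in X\}$ (equivalently, the set of $u$ such that, with $w_{e_0}=u_{e_0}:=0$, for every cycle $C$ the minimum of $\{w_e-u_e: e\in C\}$ is attained at least twice). Then $X$ and $Y$ intersect transversally at each of their intersection points.
   Context: $X$ and $Y$ are regarded as rational polyhedral complexes (tropical varieties) in $\mathbb R^n$. Two such complexes $X,Y$ intersect transversally at a point $p\in X\cap Y$ if $p$ is contained in a face $\sigma$ of $X$ and a face $\tau$ of $Y$ such that the affine span of $\sigma\cup\tau$ is all of $\mathbb R^n$. *)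

(* Defs.v *)
From HB Require Import structures.
From mathcomp Require Import all_boot all_order all_algebra.
From mathcomp Require Import reals.

Set Implicit Arguments.
Unset Strict Implicit.
Unset Printing Implicit Defensive.

Import Order.TTheory GRing.Theory Num.Theory.
Local Open Scope ring_scope.

Definition simple_graph (V : finType) (adj : rel V) : Prop :=
  symmetric adj /\ irreflexive adj.

Definition edges (V : finType) (adj : rel V) : {set {set V}} :=
  [set [set x; y] | x in V, y in V & adj x y].

Definition is_graph_cycle (V : finType) (adj : rel V) (c : seq V) : Prop :=
  [/\ uniq c, (3 <= size c)%N & cycle adj c].

Definition cycle_edge (V : finType) (c : seq V) (e : {set V}) : Prop :=
  exists2 x, x \in c & e = [set x; next c x].

Definition min_attained_twice (R : realType) (V : finType)
    (f : {set V} -> R) (c : seq V) : Prop :=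
  exists e1 e2, [/\ e1 != e2, cycle_edge c e1, cycle_edge c e2,
                    f e1 = f e2 & forall e, cycle_edge c e -> f e1 <= f e].

Definition edge_labelling (V : finType) (adj : rel V) (e0 : {set V}) (n : nat)
    (lab : 'I_n -> {set V}) : Prop :=
  [/\ injective lab,
      forall i, lab i \in edges adj /\ lab i != e0
    & forall e, e \in edges adj -> e != e0 -> exists i, lab i = e].

Definition ext_weight (R : realType) (V : finType) (n : nat)
    (lab : 'I_n -> {set V}) (u : 'rV[R]_n) (e : {set V}) : R :=
  if [pick i | lab i == e] is Some i then u 0 i else 0.

Definition Xset (R : realType) (V : finType) (adj : rel V) (n : nat)
    (lab : 'I_n -> {set V}) : 'rV[R]_n -> Prop :=
  fun u => forall c, is_graph_cycle adj c ->
             min_attained_twice (ext_weight lab u) c.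

Definition Yset (R : realType) (V : finType) (adj : rel V) (n : nat)
    (lab : 'I_n -> {set V}) (w : 'rV[R]_n) : 'rV[R]_n -> Prop :=
  fun y => exists2 u, Xset adj lab u & y = w - u.

Definition tropically_generic (R : realType) (n : nat) (w : 'rV[R]_n) : Prop :=
  forall q : 'I_n -> rat,
    \sum_(i < n) ratr (q i) * w 0 i = 0 -> forall i, q i = 0.

Definition polyhedron (R : realType) (n : nat) (S : 'rV[R]_n -> Prop) : Prop :=
  exists (m : nat) (A : 'I_m -> 'rV[R]_n) (b : 'I_m -> R),
    forall x, S x <-> (forall j, \sum_(i < n) A j 0 i * x 0 i <= b j).

Definition affine_span (R : realType) (n : nat) (S : 'rV[R]_n -> Prop)
    : 'rV[R]_n -> Prop :=
  fun x => exists (k : nat) (P : 'I_k -> 'rV[R]_n) (lam : 'I_k -> R),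
    [/\ forall j, S (P j), \sum_(j < k) lam j = 1
      & x = \sum_(j < k) lam j *: P j].

(* A face of (a polyhedral structure on) the set X through p: a polyhedron
   contained in X. *)
Definition face_of (R : realType) (n : nat) (X S : 'rV[R]_n -> Prop) : Prop :=
  polyhedron S /\ forall x, S x -> X x.

Definition transversal_at (R : realType) (n : nat)
    (X Y : 'rV[R]_n -> Prop) (p : 'rV[R]_n) : Prop :=
  exists sigma tau, [/\ face_of X sigma, face_of Y tau, sigma p, tau p
    & forall x, affine_span (fun z => sigma z \/ tau z) x].

(* Main.v *)
Require Import Defs.
From HB Require Import structures.
From mathcomp Require Import all_boot all_order all_algebra.
From mathcomp Require Import reals.
From mathcomp Require Import lra.

Set Implicit Arguments.
Unset Strict Implicit.
Import Order.TTheory GRing.Theory Num.Theory.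
Local Open Scope ring_scope.


Section Aux.
Variables (R : realType) (n : nat).
Implicit Types (u s x y : 'rV[R]_n).

Definition co u (a : option 'I_n) : R := if a is Some i then u 0 i else 0.

Definition sig s : 'rV[R]_n -> Prop :=
  fun u => forall a b, co s a <= co s b -> co u a <= co u b.

Lemma ext_co (V : finType) (lab : 'I_n -> {set V}) u e :
  ext_weight lab u e = co u [pick i | lab i == e].
Proof. by rewrite /ext_weight /co; case: pickP. Qed.

Lemma sig_X (V : finType) (adj : rel V) (lab : 'I_n -> {set V}) s :
  Xset adj lab s -> forall u, sig s u -> Xset adj lab u.
Proof.
move=> Xs u su c cc; have [e1 [e2 [ne c1 c2 eq mn]]] := Xs c cc.
exists e1, e2; split=> //.
  move: eq; rewrite !ext_co => eq; apply/eqP; rewrite eq_le.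
  by rewrite !su // eq lexx.
by move=> e ce; move: (mn e ce); rewrite !ext_co => h; apply: su.
Qed.

Lemma sig_refl s : sig s s. Proof. by []. Qed.

Lemma co0 a : co 0 a = 0. Proof. by case: a => [i|] //=; rewrite mxE. Qed.

Lemma sig0 s : sig s 0. Proof. by move=> a b _; rewrite !co0. Qed.

Lemma sum_row_co (a : option 'I_n) x :
  \sum_(i < n) (\row_i ((Some i == a)%:R : R)) 0 i * x 0 i = co x a.
Proof.
case: a => [k|] /=.
  rewrite (bigD1 k) //= mxE eqxx mul1r big1 ?addr0 // => i ik.
  by rewrite mxE /= (inj_eq (@Some_inj _)) (negbTE ik) mul0r.
by rewrite big1 // => i _; rewrite mxE mul0r.
Qed.

Lemma sig_poly s : polyhedron (sig s).
Proof.
pose T := (option 'I_n * option 'I_n)%type.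
exists #|{: T}|.
exists (fun j => let ab := enum_val j in
   if co s ab.1 <= co s ab.2 then
     \row_i ((Some i == ab.1)%:R - (Some i == ab.2)%:R) else 0).
exists (fun _ => 0) => x.
have E : forall a b, \sum_(i < n) (\row_i ((Some i == a)%:R - (Some i == b)%:R : R)) 0 i * x 0 i
   = co x a - co x b.
  move=> a b; rewrite -!sum_row_co -sumrB; apply: eq_bigr => i _.
  by rewrite !mxE mulrBl.
split.
  move=> sx j; case: (enum_val j) => a b /=.
  case: ifP => h; first by rewrite E subr_le0; apply: sx.
  by rewrite big1 // => i _; rewrite mxE mul0r.
move=> H a b hab; have := H (enum_rank (a, b)); rewrite enum_rankK /= hab E.
by rewrite subr_le0.
Qed.

Lemma poly_pre (S : 'rV[R]_n -> Prop) w :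
  polyhedron S -> polyhedron (fun y => S (w - y)).
Proof.
move=> [m [A [b H]]].
exists m, (fun j => - A j), (fun j => b j - \sum_(i < n) A j 0 i * w 0 i) => y.
have E1 : forall j, \sum_(i < n) A j 0 i * (w - y) 0 i =
   \sum_(i < n) A j 0 i * w 0 i - \sum_(i < n) A j 0 i * y 0 i.
  by move=> j; rewrite -sumrB; apply: eq_bigr => i _; rewrite !mxE mulrBr.
have E2 : forall j, \sum_(i < n) (- A j) 0 i * y 0 i =
   - \sum_(i < n) A j 0 i * y 0 i.
  by move=> j; rewrite -sumrN; apply: eq_bigr => i _; rewrite !mxE mulNr.
rewrite H; split=> h j; have := h j; rewrite ?E1 ?E2 => hj.
  move: hj; set a := \sum_(i < n) _ * y 0 i; set c := \sum_(i < n) _ * w 0 i.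
  move=> hj; clear -hj; clearbody a c.
lra.
move: hj; set a := \sum_(i < n) _ * y 0 i; set c := \sum_(i < n) _ * w 0 i.
move=> hj; clear -hj; clearbody a c; lra.
Qed.

End Aux.


Section D.
Variables (R : realType) (n : nat) (S : 'rV[R]_n -> Prop).

Definition Dset (x : 'rV[R]_n) : Prop :=
  exists k (P : 'I_k -> 'rV[R]_n) (mu : 'I_k -> R),
    [/\ forall j, S (P j), \sum_(j < k) mu j = 0 & x = \sum_(j < k) mu j *: P j].

Lemma D0 : Dset 0.
Proof. by exists 0%N, (fun _ => 0), (fun _ => 0); split; rewrite ?big_ord0 // => -[]. Qed.

Lemma DD x y : Dset x -> Dset y -> Dset (x + y).
Proof.
move=> [k1 [P1 [m1 [S1 s1 e1]]]] [k2 [P2 [m2 [S2 s2 e2]]]].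
exists (k1 + k2)%N,
  (fun j => match split j with inl a => P1 a | inr b => P2 b end),
  (fun j => match split j with inl a => m1 a | inr b => m2 b end).
have sl : forall a : 'I_k1, split (lshift k2 a) = inl a.
  by move=> a; exact: (@unsplitK k1 k2 (inl a)).
have sr : forall b : 'I_k2, split (rshift k1 b) = inr b.
  by move=> b; exact: (@unsplitK k1 k2 (inr b)).
split.
- by move=> j; case: (split j).
- rewrite big_split_ord /= (eq_bigr m1); last by move=> i _; rewrite sl.
  rewrite (eq_bigr m2); last by move=> i _; rewrite sr.
  by rewrite s1 s2 addr0.
- rewrite big_split_ord /= (eq_bigr (fun i => m1 i *: P1 i)); last by move=> i _; rewrite sl.
  rewrite (eq_bigr (fun i => m2 i *: P2 i)); last by move=> i _; rewrite sr.
  by rewrite e1 e2.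
Qed.

Lemma DZ c x : Dset x -> Dset (c *: x).
Proof.
move=> [k [P [m [S1 s1 e1]]]]; exists k, P, (fun j => c * m j); split=> //.
  by rewrite -mulr_sumr s1 mulr0.
by rewrite e1 scaler_sumr; apply: eq_bigr => j _; rewrite scalerA.
Qed.

Lemma Dsub a b : S a -> S b -> Dset (a - b).
Proof.
move=> Sa Sb; exists 2%N, (fun j => if val j == 0%N then a else b),
  (fun j => if val j == 0%N then 1 else -1); split.
- by move=> j; case: ifP.
- by rewrite !big_ord_recl big_ord0 /= addr0 subrr.
- by rewrite !big_ord_recl big_ord0 /= addr0 scale1r scaleN1r.
Qed.

Lemma Dsum (I : finType) (F : I -> 'rV[R]_n) :
  (forall i, Dset (F i)) -> Dset (\sum_i F i).
Proof. by move=> h; apply: (big_ind Dset) => //; [exact: D0 | exact: DD]. Qed.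

Lemma D_aff x : S 0 -> Dset x -> affine_span S x.
Proof.
move=> S0 [k [P [m [S1 s1 e1]]]].
exists k.+1, (fun j : 'I_k.+1 => if unlift ord0 j is Some j' then P j' else 0),
  (fun j : 'I_k.+1 => if unlift ord0 j is Some j' then m j' else 1); split.
- by move=> j; case: (unlift ord0 j).
- rewrite big_ord_recl unlift_none (eq_bigr m) ?s1 ?addr0 //.
  by move=> i _; rewrite liftK.
- rewrite big_ord_recl unlift_none scaler0 add0r e1.
  by apply: eq_bigr => i _; rewrite liftK.
Qed.

End D.


Section S3.
Variables (R : realType) (n : nat).

Lemma weightL (f phi : 'I_n -> R) :
  (forall i, f i != 0 -> \sum_j phi j * (if f j == f i then 1 else 0) = 0) ->
  \sum_j phi j * f j = 0.
Proof.
move=> H.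
pose N (v : R) := \sum_(k < n) (if f k == v then 1 else 0 : R).
have NP : forall j, N (f j) != 0.
  move=> j; apply: lt0r_neq0; rewrite /N (bigD1 j) //= eqxx.
  apply: (lt_le_trans ltr01); rewrite lerDl sumr_ge0 // => k _.
  by case: ifP.
have E : forall j, f j = \sum_i (if f i == f j then 1 else 0) * (f i / N (f i)).
  move=> j; transitivity (\sum_i (if f i == f j then 1 else 0) * (f j / N (f j))).
    by rewrite -mulr_suml mulrC divfK.
  by apply: eq_bigr => i _; case: ifP => [/eqP ->|_]; rewrite ?mul0r.
transitivity (\sum_j \sum_i phi j * ((if f i == f j then 1 else 0) * (f i / N (f i)))).
  by apply: eq_bigr => j _; rewrite {1}E mulr_sumr.
rewrite exchange_big /=; apply: big1 => i _.
have [fi0|fi0] := eqVneq (f i) 0.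
  by apply: big1 => j _; rewrite fi0 !(mul0r, mulr0).
transitivity ((\sum_j phi j * (if f j == f i then 1 else 0)) * (f i / N (f i))).
  rewrite mulr_suml; apply: eq_bigr => j _; rewrite mulrA; congr (_ * _ * _).
  by rewrite eq_sym.
by rewrite H // mul0r.
Qed.

Lemma mono_sig (s : 'rV[R]_n) (h : R -> R) :
  (forall x y, x <= y -> h x <= h y) -> h 0 = 0 -> sig s (\row_j h (s 0 j)).
Proof.
move=> hm h0.
have E : forall a, co (\row_j h (s 0 j)) a = h (co s a).
  by case=> [i|] /=; rewrite ?mxE.
by move=> a b hab; rewrite !E; apply: hm.
Qed.

Lemma decompG (s : 'rV[R]_n) (v : R) : v != 0 ->
  exists a b, [/\ sig s a, sig s b & \row_j (if s 0 j == v then 1 else 0) = a - b].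
Proof.
move=> v0; case: (ltgtP v 0) => [vn|vp|v00]; last by rewrite v00 eqxx in v0.
- exists (\row_j (if s 0 j < v then -1 else 0)), (\row_j (if s 0 j <= v then -1 else 0)).
  split.
  + apply: (mono_sig (h := fun x => if x < v then -1 else 0)); last by rewrite ltNge ltW.
    move=> x y xy; case: ifP => hx; case: ifP => hy //; try lra.
  + apply: (mono_sig (h := fun x => if x <= v then -1 else 0)); last by rewrite leNgt vn.
    move=> x y xy; case: ifP => hx; case: ifP => hy //; try lra.
  + apply/rowP => j; rewrite !mxE.
    by case: (ltgtP (s 0 j) v) => _ /=; lra.
- exists (\row_j (if v <= s 0 j then 1 else 0)), (\row_j (if v < s 0 j then 1 else 0)).
  split.
  + apply: (mono_sig (h := fun x => if v <= x then 1 else 0)); last by rewrite leNgt vp.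
    move=> x y xy; case: ifP => hx; case: ifP => hy //; try lra.
  + apply: (mono_sig (h := fun x => if v < x then 1 else 0)); last by rewrite ltNge ltW.
    move=> x y xy; case: ifP => hx; case: ifP => hy //; try lra.
  + apply/rowP => j; rewrite !mxE.
    by case: (ltgtP (s 0 j) v) => _ /=; lra.
Qed.

End S3.


Section S4.
Variables (R : realType) (n : nat).

Definition gb (s : 'rV[R]_n) (i j : 'I_n) : rat :=
  if (s 0 j == s 0 i) && (s 0 i != 0) then 1 else 0.

Definition Mgen (p q : 'rV[R]_n) : 'M[rat]_(n + n, n) :=
  \matrix_(k, j) match split k with inl i => gb p i j | inr i => gb q i j end.

Lemma ratr_if (b : bool) : ratr (if b then 1 else 0 : rat) = (if b then 1 else 0 : R).
Proof. by case: b; rewrite ?rmorph1 ?rmorph0. Qed.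

Lemma part_zero (s : 'rV[R]_n) (phi : 'I_n -> rat) :
  (forall i, \sum_j phi j * gb s i j = 0) ->
  \sum_j ratr (phi j) * s 0 j = 0 :> R.
Proof.
move=> H; apply: (weightL (f := fun j => s 0 j)) => i si.
have := congr1 (fun x : rat => ratr x : R) (H i).
rewrite rmorph_sum rmorph0 => E; rewrite -[RHS]E; apply: eq_bigr => j _.
rewrite rmorphM /gb /= si andbT; congr (_ * _).
by case: ifP => _; rewrite ?rmorph1 ?rmorph0.
Qed.

Lemma rank_full (p q w : 'rV[R]_n) :
  tropically_generic w -> w = p + q -> row_full (Mgen p q).
Proof.
move=> gen wpq; apply/idPn => nf.
have rk : (\rank (Mgen p q) < n)%N.
  by rewrite ltn_neqAle nf rank_leq_col.
set K := kermx (Mgen p q)^T.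
have K0 : K != 0.
  rewrite -mxrank_eq0 mxrank_ker mxrank_tr; apply/eqP => h.
  by move/eqP: h; rewrite subn_eq0 leqNgt rk.
have [r [j0 Krj]] : exists r j, K r j != 0.
  case: (pickP (fun rj : 'I_n * 'I_n => K rj.1 rj.2 != 0)) => [[r j] /= Krj | H0].
    by exists r, j.
  exfalso; move/eqP: K0; apply; apply/matrixP => a b; have := H0 (a, b).
  by move=> /= /negbFE/eqP ->; rewrite mxE.
have KM := mulmx_ker (Mgen p q)^T.
have hp : forall i, \sum_j K r j * gb p i j = 0.
  move=> i; have := congr1 (fun A : 'M[rat]_(n, n + n) => A r (lshift n i)) KM.
  rewrite mxE [RHS]mxE => e; rewrite -[RHS]e.
  apply: eq_bigr => j _; congr (_ * _); rewrite !mxE.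
  by rewrite (@unsplitK n n (inl i)).
have hq : forall i, \sum_j K r j * gb q i j = 0.
  move=> i; have := congr1 (fun A : 'M[rat]_(n, n + n) => A r (rshift n i)) KM.
  rewrite mxE [RHS]mxE => e; rewrite -[RHS]e.
  apply: eq_bigr => j _; congr (_ * _); rewrite !mxE.
  by rewrite (@unsplitK n n (inr i)).
suff S0 : \sum_(j < n) ratr (K r j) * w 0 j = 0.
  by move: (gen (fun j => K r j) S0 j0) => /= h; rewrite h eqxx in Krj.
rewrite (eq_bigr (fun j => ratr (K r j) * p 0 j + ratr (K r j) * q 0 j)).
  by rewrite big_split /= (part_zero hp) (part_zero hq) addr0.
by move=> j _; rewrite wpq [(p + q) 0 j]mxE mulrDr.
Qed.

End S4.

Theorem lemma2p2 (R : realType) (V : finType) (adj : rel V) (v1 v2 : V)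
    (n : nat) (lab : 'I_n -> {set V}) (w : 'rV[R]_n) :
  simple_graph adj ->
  adj v1 v2 ->
  edge_labelling adj [set v1; v2] lab ->
  tropically_generic w ->
  forall p : 'rV[R]_n, Xset adj lab p -> Yset adj lab w p ->
    transversal_at (Xset adj lab) (Yset adj lab w) p.
Proof.
move=> _ _ _ gen p Xp [q Xq pe].
pose sp := sig p; pose st := fun y => sig q (w - y).
exists sp, st; split.
- by split; [exact: sig_poly | exact: sig_X Xp].
- split; first by apply: poly_pre; exact: sig_poly.
  move=> y sy; exists (w - y); first exact: sig_X Xq _ sy.
  by rewrite subKr.
- exact: sig_refl.
- by rewrite /st pe subKr; exact: sig_refl.
move=> x; apply: D_aff; first by left; exact: sig0.
have full := rank_full gen (esym (etrans (congr1 (fun t => t + q) pe) (subrK q w))).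
have fullR : row_full (map_mx ratr (Mgen p q) : 'M[R]_(n + n, n)).
  by rewrite /row_full mxrank_map.
have /submxP [D ->] := submx_full x fullR.
rewrite mulmx_sum_row; apply: Dsum => k; apply: DZ.
have rowE : row k (map_mx ratr (Mgen p q) : 'M[R]_(n + n, n)) =
   match split k with
   | inl i => \row_j (if (p 0 j == p 0 i) && (p 0 i != 0) then 1 else 0)
   | inr i => \row_j (if (q 0 j == q 0 i) && (q 0 i != 0) then 1 else 0) end.
  apply/rowP => j; rewrite [LHS]mxE [LHS]mxE /Mgen mxE; case: (split k) => i; rewrite /gb mxE;
  by case: ifP => _; rewrite ?rmorph1 ?rmorph0.
rewrite rowE; case: (split k) => i.
- have [p0|p0] := eqVneq (p 0 i) 0.
    rewrite (_ : \row_j _ = 0); first exact: D0.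
    by apply/rowP => j; rewrite !mxE /= andbF.
  have [a [b [sa sb e]]] := decompG p p0.
  rewrite (_ : \row_j _ = \row_j (if p 0 j == p 0 i then 1 else 0)); last first.
    by apply/rowP => j; rewrite !mxE /= andbT.
  by rewrite e; apply: Dsub; left.
- have [q0|q0] := eqVneq (q 0 i) 0.
    rewrite (_ : \row_j _ = 0); first exact: D0.
    by apply/rowP => j; rewrite !mxE /= andbF.
  have [a [b [sa sb e]]] := decompG q q0.
  rewrite (_ : \row_j _ = \row_j (if q 0 j == q 0 i then 1 else 0)); last first.
    by apply/rowP => j; rewrite !mxE /= andbT.
  rewrite e; have -> : a - b = (w - b) - (w - a) by rewrite opprB [RHS]addrC addrA subrK.
  by apply: Dsub; right; rewrite /st subKr.
Qed.
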